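(* Fix $0<\varepsilon<1/4$ and $0<\beta<1/4$. Let $\delta(n)$ be a positive non-increasing sequence such that for every positive integer $n$, $$P_n:=\frac{e^\varepsilon}{e^\varepsilon+1}+(e^\varepsilon+1)\sum_{j=1}^n\delta(j)\le 1-\beta,$$ and such that $b(n):=1/\delta(n)$ is an integer for every $n$. Define $S(1)=2$ and $S(n+1)=b(n)^{S(n)}$. Then for every positive integer $n$ there exists a distribution $\mathcal{D}_n$ over databases $D\in[S(n)]^n$, where $[S(n)]=\{0,1,\dots,S(n)-1\}$, such that for every $(\varepsilon,\delta(n))$-differentially private mechanism $\mathcal{M}:[S(n)]^n\to[S(n)]$, $$\Pr[\min D\le \mathcal{M}(D)\le \max D]\le P_n,$$ where the probability is over $D\sim\mathcal{D}_n$ and the coins of $\mathcal{M}$.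
   Context: A randomized algorithm $M:X^n\to Y$ is $(\varepsilon,\delta)$-differentially private if for every two databases $D,D'\in X^n$ differing in exactly one row and every set $T\subseteq Y$, $\Pr[M(D)\in T]\le e^{\varepsilon}\Pr[M(D')\in T]+\delta$. *)

(* Defs.v *)
From HB Require Import structures.
From mathcomp Require Import all_boot all_order all_algebra.
From mathcomp Require Import all_classical all_reals all_analysis.
Set Implicit Arguments. Unset Strict Implicit. Unset Printing Implicit Defensive.
Import Order.TTheory GRing.Theory Num.Theory.
Local Open Scope ring_scope.

(* S(1) = 2, S(n+1) = b(n)^S(n); Sseq b n = Saux b (n-1). Sseq b 0 = 2 is junk. *)
Fixpoint Saux (b : nat -> nat) (k : nat) : nat :=
  match k with
  | 0 => 2
  | k'.+1 => (b k'.+1 ^ Saux b k')%N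
  end.
Definition Sseq (b : nat -> nat) (n : nat) : nat := Saux b n.-1.

Definition db (n S : nat) := {ffun 'I_n -> 'I_S}.

Definition minD n S (D : db n S) : nat := \big[minn/S]_(i < n) (D i : nat).
Definition maxD n S (D : db n S) : nat := \max_(i < n) (D i : nat).

Definition is_distr (R : realType) (T : finType) (p : T -> R) :=
  (forall x, 0 <= p x) /\ \sum_(x : T) p x = 1.

Definition neighbors n S (D D' : db n S) := #|[set i | D i != D' i]| = 1%N.

Definition is_mech (R : realType) n S (M : db n S -> 'I_S -> R) :=
  forall D, is_distr (M D).

Definition is_dp (R : realType) n S (eps del : R) (M : db n S -> 'I_S -> R) :=
  forall D D' : db n S, neighbors D D' ->
  forall T : {set 'I_S},
    \sum_(y in T) M D y <= expR eps * \sum_(y in T) M D' y + del.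

Definition success (R : realType) n S (Dn : db n S -> R) (M : db n S -> 'I_S -> R) :=
  \sum_(D : db n S) Dn D * \sum_(y : 'I_S | (minD D <= y <= maxD D)%N) M D y.

Definition Pbound (R : realType) (eps : R) (delta : nat -> R) (n : nat) : R :=
  expR eps / (expR eps + 1) + (expR eps + 1) * \sum_(1 <= j < n.+1) delta j.

(* Main.v *)
Require Import Defs.
From HB Require Import structures.
From mathcomp Require Import all_boot all_order all_algebra.
From mathcomp Require Import all_classical all_reals all_analysis.
From mathcomp Require Import zify ring lra.
Import Order.TTheory GRing.Theory Num.Theory.
Set Implicit Arguments. Unset Strict Implicit. Unset Printing Implicit Defensive.
Local Open Scope ring_scope.

Definition qq (B S k : nat) : nat := (B ^ (S - k))%N.
Definition agree (B S k w z : nat) : bool := (w %/ qq B S k == z %/ qq B S k)%N.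

Lemma agree_down B S j k w z : (j <= k)%N -> (k <= S)%N ->
  agree B S k w z -> agree B S j w z.
Proof.
move=> jk kS /eqP h; apply/eqP.
have -> : qq B S j = (qq B S k * B ^ (k - j))%N.
  by rewrite /qq -expnD; congr (_ ^ _)%N; lia.
by rewrite !divnMA h.
Qed.

Definition decn B S (w z : nat) : nat := (\max_(k < S | agree B S k w z) k)%N.

Lemma decn_lt B S w z : (0 < S)%N -> (decn B S w z < S)%N.
Proof.
move=> S0; rewrite /decn.
apply: (@leq_ltn_trans S.-1); last by rewrite prednK.
by apply/bigmax_leqP => k _; rewrite -ltnS prednK.
Qed.

Definition decO B S (hS : (0 < S)%N) (w z : nat) : 'I_S := Ordinal (@decn_lt B S w z hS).

Lemma decn_ge B S k w z : (k < S)%N -> agree B S k w z -> (k <= decn B S w z)%N.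
Proof. by move=> kS a; exact: (@leq_bigmax_cond _ _ (fun k : 'I_S => nat_of_ord k) (Ordinal kS)). Qed.

Lemma decn_gt B S m w z : (m < decn B S w z)%N -> (m < S)%N -> agree B S m.+1 w z.
Proof.
move=> h mS; case: (boolP (agree B S m.+1 w z)) => // na.
have : (decn B S w z <= m)%N.
  apply/bigmax_leqP => k ak; rewrite leqNgt; apply/negP => mk.
  by move: na; rewrite (@agree_down B S m.+1 k) // ltnW.
by rewrite leqNgt h.
Qed.

Lemma trunc_lt B S k (z : 'I_(B ^ S)) : (z %/ qq B S k * qq B S k < B ^ S)%N.
Proof. exact: leq_ltn_trans (leq_divM _ _) (ltn_ord z). Qed.

Definition trunc B S k (z : 'I_(B ^ S)) : 'I_(B ^ S) := Ordinal (@trunc_lt B S k z).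

Lemma qq_gt0 B S k : (0 < B)%N -> (0 < qq B S k)%N.
Proof. by move=> B0; rewrite /qq expn_gt0 B0. Qed.

Lemma agree_trunc B S k (z : 'I_(B ^ S)) : (0 < B)%N -> agree B S k (@trunc B S k z) z.
Proof. by move=> B0; rewrite /agree /= mulnK // qq_gt0. Qed.

Definition Yg n B S (D : db n S) (l z : 'I_(B ^ S)) : db n.+1 (B ^ S) :=
  [ffun i => if unlift ord_max i is Some j then trunc (D j) z else l].

Arguments Yg {n B S}.
Definition Ymap n B S (D : db n S) (z : 'I_(B ^ S)) := Yg D z z.
Arguments Ymap {n B S}.

Lemma minD_le n S (D : db n S) j : (minD D <= D j)%N.
Proof.
rewrite /minD; have : j \in index_enum 'I_n by rewrite mem_index_enum.
elim: (index_enum _) => // a r IH; rewrite in_cons big_cons.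
case/orP => [/eqP -> | /IH h]; first exact: geq_minl.
by rewrite geq_min h orbT.
Qed.

Lemma maxD_ge n S (D : db n S) j : (D j <= maxD D)%N.
Proof. by rewrite /maxD (leq_bigmax j). Qed.

Lemma minD_lt n S (D : db n S) : (0 < n)%N -> (minD D < S)%N.
Proof. by move=> n0; apply: leq_ltn_trans (minD_le D (Ordinal n0)) _. Qed.

Lemma interval_agree n B S (D : db n S) (z w : 'I_(B ^ S)) k :
  (0 < B)%N ->
  (forall i, agree B S k (Ymap D z i) z) ->
  (minD (Ymap D z) <= w <= maxD (Ymap D z))%N -> agree B S k w z.
Proof.
move=> B0 hall /andP [h1 h2].
set q := qq B S k.
have q0 : (0 < q)%N by apply: qq_gt0.
have lo : (z %/ q * q <= minD (Ymap D z))%N.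
  rewrite /minD; apply: (big_ind (fun x => z %/ q * q <= x)%N).
  - exact: ltnW (trunc_lt k z).
  - by move=> x y hx hy; rewrite leq_min hx hy.
  - move=> i _; move/eqP: (hall i) => e.
    by rewrite -/q -e leq_divM.
have hi : (maxD (Ymap D z) <= ((z %/ q).+1 * q).-1)%N.
  apply/bigmax_leqP => i _; move/eqP: (hall i) => e.
  rewrite -ltnS prednK; last by rewrite muln_gt0 q0.
  by rewrite -/q -e ltn_ceil.
apply/eqP; apply/eqP; rewrite eqn_leq; apply/andP; split.
  rewrite -ltnS ltn_divLR //; rewrite -ltnS prednK in hi; last by rewrite muln_gt0 q0.
  exact: leq_ltn_trans h2 hi.
by rewrite leq_divRL //; apply: leq_trans lo h1.
Qed.

Lemma rows_agree n B S (D : db n S) (z : 'I_(B ^ S)) i :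
  (0 < B)%N -> agree B S (minD D) (Ymap D z i) z.
Proof.
move=> B0; rewrite /Ymap /Yg ffunE.
case: unliftP => [j _|_]; last by rewrite /agree eqxx.
apply: (@agree_down B S _ (D j)); first exact: minD_le.
  exact: ltnW (ltn_ord _).
exact: agree_trunc.
Qed.

Lemma key_interval n B S (D : db n S) (z w : 'I_(B ^ S)) :
  (0 < n)%N -> (0 < B)%N ->
  (minD (Ymap D z) <= w <= maxD (Ymap D z))%N ->
  (minD D <= decn B S w z <= maxD D)%N || agree B S (maxD D).+1 w z.
Proof.
move=> n0 B0 hw.
have a : agree B S (minD D) w z.
  by apply: interval_agree hw => // i; apply: rows_agree.
have mS := minD_lt D n0.
rewrite (decn_ge mS a) /=.
case: leqP => //= hlt; apply: decn_gt hlt _.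
have : (maxD D <= S.-1)%N.
  by rewrite /maxD; apply/bigmax_leqP => i _; rewrite -ltnS prednK //; exact: leq_ltn_trans (minD_lt D n0).
by move=> h; rewrite (leq_ltn_trans h) // prednK //; exact: leq_ltn_trans (minD_lt D n0).
Qed.

Lemma diff_le1_eq n T (Y Y' : db n T) : #|[set i | Y i != Y' i]| = 0%N -> Y = Y'.
Proof.
move=> /eqP; rewrite cards_eq0 => /eqP h; apply/ffunP => i.
apply/eqP; apply: contraT => hi.
have : i \in [set i | Y i != Y' i] by rewrite inE.
by rewrite h inE.
Qed.

Lemma dp_le1 (R : realType) n T (eps d : R) (M : db n T -> 'I_T -> R) (Y Y' : db n T) :
  0 <= eps -> 0 <= d -> is_mech M -> is_dp eps d M ->
  (#|[set i | Y i != Y' i]| <= 1)%N ->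
  forall A : {set 'I_T}, \sum_(y in A) M Y y <= expR eps * \sum_(y in A) M Y' y + d.
Proof.
move=> e0 d0 hM hdp hc A.
move: hc; rewrite leq_eqVlt ltnS leqn0 => /orP [/eqP h|/eqP h].
  exact: hdp.
rewrite (diff_le1_eq h).
have s0 : 0 <= \sum_(y in A) M Y' y by apply: sumr_ge0 => y _; case: (hM Y') => ? _.
have e1 : 1 <= expR eps by apply: le_trans (expR_ge1Dx eps); lra.
move: s0 e1 d0; set s := \sum_(y in A) M Y' y; set e := expR eps; nra.
Qed.

Lemma Ymap_nb n B S (D D' : db n S) (z : 'I_(B ^ S)) :
  neighbors D D' -> (#|[set i | Ymap D z i != Ymap D' z i]| <= 1)%N.
Proof.
move=> hn; have : (#|[set j | D j != D' j]| <= 1)%N by rewrite hn.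
move/card_le1_eqP => hj.
apply/card_le1_eqP => i i'; rewrite !inE /Ymap /Yg !ffunE.
case: unliftP => [j -> hi|_]; last by rewrite eqxx.
case: unliftP => [j' -> hi'|_]; last by rewrite eqxx.
have dj : D j != D' j by apply: contra hi => /eqP ->.
have dj' : D j' != D' j' by apply: contra hi' => /eqP ->.
by rewrite (hj j j') // inE.
Qed.

Lemma Ylast_nb n B S (D : db n S) (l z : 'I_(B ^ S)) :
  (#|[set i | Ymap D z i != Yg D l z i]| <= 1)%N.
Proof.
apply/card_le1_eqP => i i'; rewrite !inE /Ymap /Yg !ffunE.
case: unliftP => [j _ |-> _]; first by rewrite eqxx.
by case: unliftP => [j _ |-> _]; first by rewrite eqxx.
Qed.

Lemma trunc_eq B S k m (z z' : 'I_(B ^ S)) : (k <= m)%N -> (m <= S)%N ->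
  agree B S m z z' -> trunc k z = trunc k z'.
Proof.
move=> km mS a; apply: val_inj => /=.
by move/eqP: (agree_down km mS a) => ->.
Qed.

Lemma Yg_eq n B S (D : db n S) (z z' : 'I_(B ^ S)) :
  (0 < n)%N -> agree B S (maxD D) z z' ->
  Yg D (trunc (maxD D) z) z = Yg D (trunc (maxD D) z') z'.
Proof.
move=> n0 a; have mS : (maxD D <= S)%N.
  by rewrite /maxD; apply/bigmax_leqP => i _; exact: ltnW (ltn_ord _).
apply/ffunP => i; rewrite !ffunE.
case: unliftP => [j _|_]; last exact: trunc_eq a.
apply: trunc_eq a => //; exact: maxD_ge.
Qed.

Lemma count_agree B S m (w : 'I_(B ^ S)) : (0 < B)%N ->
  (#|[pred z : 'I_(B ^ S) | agree B S m w z]| <= qq B S m)%N.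
Proof.
move=> B0; set p := qq B S m; have p0 : (0 < p)%N by apply: qq_gt0.
have -> : p = #|'I_p| by rewrite card_ord.
apply: (@leq_card_in _ _ (fun z : 'I_(B ^ S) => Ordinal (ltn_pmod z p0))).
move=> z z'; rewrite !inE /agree -/p => /eqP h /eqP h' [e].
apply: val_inj => /=.
by rewrite (divn_eq z p) (divn_eq z' p) e -h -h'.
Qed.

Lemma count_sum (R : realType) B S m (g : 'I_(B ^ S) -> 'I_(B ^ S) -> R) :
  (0 < B)%N -> (m < S)%N ->
  (forall z w, 0 <= g z w) -> (forall z, \sum_w g z w = 1) ->
  (forall z z' : 'I_(B ^ S), agree B S m z z' -> g z = g z') ->
  \sum_(z : 'I_(B ^ S)) \sum_(w : 'I_(B ^ S) | agree B S m.+1 w z) g z w <= (B ^ S.-1)%:R.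
Proof.
move=> B0 mS g0 g1 gq.
have -> : \sum_(z : 'I_(B ^ S)) \sum_(w : 'I_(B ^ S) | agree B S m.+1 w z) g z w =
          \sum_(z : 'I_(B ^ S)) \sum_(w : 'I_(B ^ S) | agree B S m.+1 w z) g w w.
  apply: eq_bigr => z _; apply: eq_bigr => w a.
  have a' : agree B S m z w.
    have := @agree_down B S m m.+1 w z (leqnSn m) mS a.
    by rewrite /agree eq_sym.
  by rewrite (gq z w a').
rewrite (eq_bigr (fun z : 'I_(B ^ S) => \sum_(w : 'I_(B ^ S)) if agree B S m.+1 w z then g w w else 0));
  last by move=> z _; rewrite big_mkcond.
rewrite exchange_big /=.
rewrite (eq_bigr (fun w : 'I_(B ^ S) => g w w *+ #|[pred z : 'I_(B ^ S) | agree B S m.+1 w z]|)); last first.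
  by move=> w _; rewrite -big_mkcond /= sumr_const.
set Q := qq B S m.
have Q0 : (0 < Q)%N by apply: qq_gt0.
have rep_lt : forall a : 'I_(B ^ m), (a * Q < B ^ S)%N.
  move=> a; apply: (@leq_trans (B ^ m * Q)); first by rewrite ltn_pmul2r.
  by rewrite /Q /qq -expnD subnKC // ltnW.
pose rep (a : 'I_(B ^ m)) : 'I_(B ^ S) := Ordinal (rep_lt a).
have wq : forall w : 'I_(B ^ S), (w %/ Q < B ^ m)%N.
  move=> w; rewrite ltn_divLR // /Q /qq -expnD subnKC ?ltn_ord //; exact: ltnW.
have step : forall w : 'I_(B ^ S), g w w *+ #|[pred z : 'I_(B ^ S) | agree B S m.+1 w z]|
    <= (qq B S m.+1)%:R * \sum_(a : 'I_(B ^ m)) g (rep a) w.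
  move=> w.
  have -> : g w w = g (rep (Ordinal (wq w))) w.
    have a' : agree B S m w (rep (Ordinal (wq w))) by rewrite /agree /= mulnK.
    by rewrite (gq _ _ a').
  rewrite -[X in X <= _]mulr_natl; apply: ler_pM.
  - by rewrite ler0n.
  - exact: g0.
  - by rewrite ler_nat count_agree.
  - by rewrite (bigD1 (Ordinal (wq w))) //= lerDl sumr_ge0.
apply: le_trans (ler_sum _ (fun w _ => step w)) _.
rewrite -mulr_sumr exchange_big /=.
rewrite (eq_bigr (fun _ => 1)); last by move=> a _; rewrite g1.
rewrite sumr_const card_ord -natrM ler_nat /qq -expnD.
by rewrite leq_eqVlt; apply/orP; left; apply/eqP; congr (_ ^ _)%N; lia.
Qed.

Definition Mred (R : realType) n B S (hS : (0 < S)%N)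
  (M' : db n.+1 (B ^ S) -> 'I_(B ^ S) -> R) (D : db n S) (y : 'I_S) : R :=
  \sum_(z : 'I_(B ^ S)) ((B ^ S)%:R^-1 *
      \sum_(w : 'I_(B ^ S) | @decO B S hS w z == y) M' (Ymap D z) w).

Lemma Mred_sumA (R : realType) n B S (hS : (0 < S)%N)
  (M' : db n.+1 (B ^ S) -> 'I_(B ^ S) -> R) (D : db n S) (A : {set 'I_S}) :
  \sum_(y in A) Mred hS M' D y =
  \sum_(z : 'I_(B ^ S)) ((B ^ S)%:R^-1 *
      \sum_(w : 'I_(B ^ S) | @decO B S hS w z \in A) M' (Ymap D z) w).
Proof.
rewrite /Mred exchange_big /=; apply: eq_bigr => z _; rewrite -mulr_sumr; congr (_ * _).
rewrite (partition_big (fun w : 'I_(B ^ S) => @decO B S hS w z) (mem A)) //=.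
apply: eq_bigr => j hj; apply: eq_bigl => w.
by apply/esym; apply: andb_idl => /eqP ->.
Qed.

Lemma sum_unif (R : realType) (N : nat) : (0 < N)%N ->
  \sum_(z : 'I_N) (N%:R^-1 : R) = 1.
Proof.
move=> N0; rewrite sumr_const card_ord -[LHS]mulr_natl mulfV //.
by rewrite pnatr_eq0 -lt0n.
Qed.

Lemma Mred_mech (R : realType) n B S (hS : (0 < S)%N)
  (M' : db n.+1 (B ^ S) -> 'I_(B ^ S) -> R) :
  (0 < B)%N -> is_mech M' -> is_mech (Mred hS M').
Proof.
move=> B0 hM D; split.
  move=> y; apply: sumr_ge0 => z _; apply: mulr_ge0; first by rewrite invr_ge0 ler0n.
  by apply: sumr_ge0 => w _; case: (hM (Ymap D z)) => h _; exact: h.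
have := Mred_sumA hS M' D [set: 'I_S].
rewrite (eq_bigl predT); last by move=> y; rewrite finset.in_setT.
move=> ->; rewrite -[RHS](@sum_unif R (B ^ S)) ?expn_gt0 ?B0 //.
apply: eq_bigr => z _.
rewrite (eq_bigl predT); last by move=> w; rewrite finset.in_setT.
by case: (hM (Ymap D z)) => _ ->; rewrite mulr1.
Qed.

Lemma Mred_dp (R : realType) n B S (hS : (0 < S)%N) (eps d : R)
  (M' : db n.+1 (B ^ S) -> 'I_(B ^ S) -> R) :
  (0 < B)%N -> 0 <= eps -> 0 <= d -> is_mech M' -> is_dp eps d M' ->
  is_dp eps d (Mred hS M').
Proof.
move=> B0 e0 d0 hM hdp D D' hn A.
rewrite !Mred_sumA.
set c : R := (B ^ S)%:R^-1.
have c0 : 0 <= c by rewrite invr_ge0 ler0n.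
pose W (z : 'I_(B ^ S)) := [set w : 'I_(B ^ S) | @decO B S hS w z \in A].
have eW : forall (D0 : db n S) (z : 'I_(B ^ S)), \sum_(w : 'I_(B ^ S) | @decO B S hS w z \in A) M' (Ymap D0 z) w =
    \sum_(w in W z) M' (Ymap D0 z) w.
  by move=> D0 z; apply: eq_bigl => w; rewrite inE.
under eq_bigr do rewrite eW.
under [X in _ <= expR eps * X + _]eq_bigr do rewrite eW.
apply: le_trans (ler_sum _ (fun z _ => ler_wpM2l c0
   (dp_le1 e0 d0 hM hdp (Ymap_nb z hn) (W z)))) _.
rewrite le_eqVlt; apply/orP; left; apply/eqP.
rewrite (eq_bigr (fun z => expR eps * (c * \sum_(w in W z) M' (Ymap D' z) w) + c * d));
  last by move=> z _; rewrite mulrDr mulrCA.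
rewrite big_split /= -mulr_sumr -mulr_suml /c sum_unif ?mul1r //.
by rewrite expn_gt0 B0.
Qed.

Definition Dnext (R : realType) n B S (Dn : db n S -> R) (Y : db n.+1 (B ^ S)) : R :=
  \sum_(D : db n S) \sum_(z : 'I_(B ^ S)) (Dn D * (B ^ S)%:R^-1 * (Y == Ymap D z)%:R).
Arguments Dnext {R n} B {S}.

Lemma push (R : realType) n B S (Dn : db n S -> R) (F : db n.+1 (B ^ S) -> R) :
  \sum_Y Dnext B Dn Y * F Y =
  \sum_(D : db n S) \sum_(z : 'I_(B ^ S)) (Dn D * (B ^ S)%:R^-1 * F (Ymap D z)).
Proof.
rewrite /Dnext.
under eq_bigr do rewrite mulr_suml.
rewrite exchange_big /=; apply: eq_bigr => D _.
under eq_bigr do rewrite mulr_suml.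
rewrite exchange_big /=; apply: eq_bigr => z _.
rewrite (bigD1 (Ymap D z)) //= eqxx mulr1 big1 ?addr0 //.
by move=> Y /negbTE ->; rewrite mulr0 mul0r.
Qed.

Lemma Dnext_distr (R : realType) n B S (Dn : db n S -> R) :
  (0 < B)%N -> is_distr Dn -> is_distr (Dnext B Dn).
Proof.
move=> B0 [h0 h1]; split.
  move=> Y; apply: sumr_ge0 => D _; apply: sumr_ge0 => z _.
  by rewrite !mulr_ge0 // ?invr_ge0 ?ler0n.
have e := @push R n B S Dn (fun _ => 1).
rewrite (eq_bigr (fun Y => Dnext B Dn Y * 1)); last by move=> *; rewrite mulr1.
rewrite e -[RHS]h1; apply: eq_bigr => D _.
under eq_bigr => z _ do rewrite mulr1.
by rewrite -mulr_sumr sum_unif ?mulr1 // expn_gt0 B0.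
Qed.

Lemma sum_split_le (R : realType) (T : finType) (f : T -> R) (P P1 P2 : pred T) :
  (forall w, 0 <= f w) -> (forall w, P w -> P1 w || P2 w) ->
  \sum_(w | P w) f w <= \sum_(w | P1 w) f w + \sum_(w | P2 w) f w.
Proof.
move=> f0 hP; rewrite !(big_mkcond P) !(big_mkcond P1) (big_mkcond P2) -big_split /=.
apply: ler_sum => w _; case: (boolP (P w)) => Pw.
  case/orP: (hP w Pw) => -> /=; first by rewrite lerDl; case: ifP.
  by rewrite lerDr; case: ifP.
by rewrite addr_ge0 //; case: ifP.
Qed.

Lemma maxD_lt n S (D : db n S) : (0 < n)%N -> (maxD D < S)%N.
Proof.
move=> n0; have S0 : (0 < S)%N by apply: leq_ltn_trans (minD_lt D n0).
have : (maxD D <= S.-1)%N.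
  by rewrite /maxD; apply/bigmax_leqP => i _; rewrite -ltnS prednK.
by move=> h; rewrite (leq_ltn_trans h) // prednK.
Qed.

Lemma unifB (R : realType) B S : (0 < B)%N -> (0 < S)%N ->
  (B ^ S)%:R^-1 * (B ^ S.-1)%:R = (B%:R^-1 : R).
Proof.
move=> B0 S0; rewrite -{1}(prednK S0) expnS natrM invfM -mulrA mulVf ?mulr1 //.
by rewrite pnatr_eq0 -lt0n expn_gt0 B0.
Qed.

Lemma step (R : realType) n B S (eps d d' Q : R) (Dn : db n S -> R) (hS : (0 < S)%N) :
  (0 < n)%N -> (0 < B)%N -> 0 <= eps -> 0 <= d' -> d' <= d -> is_distr Dn ->
  (forall M : db n S -> 'I_S -> R, is_mech M -> is_dp eps d M -> success Dn M <= Q) ->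
  forall M' : db n.+1 (B ^ S) -> 'I_(B ^ S) -> R, is_mech M' -> is_dp eps d' M' ->
  success (Dnext B Dn) M' <= Q + expR eps / B%:R + d'.
Proof.
move=> n0 B0 e0 d0 dd [Dn0 Dn1] IH M' hM hdp.
have hdpd : is_dp eps d (Mred hS M').
  move=> D D' hn A; apply: le_trans (Mred_dp hS B0 e0 d0 hM hdp hn A) _.
  by rewrite lerD2l.
have := IH _ (Mred_mech hS B0 hM) hdpd.
set c : R := (B ^ S)%:R^-1.
have c0 : 0 <= c by rewrite invr_ge0 ler0n.
set K := expR eps / B%:R + d'.
pose G (D : db n S) := \sum_(z : 'I_(B ^ S)) (c * \sum_(w : 'I_(B ^ S) |
   (minD D <= decn B S w z <= maxD D)%N) M' (Ymap D z) w).
have eS : success Dn (Mred hS M') = \sum_D Dn D * G D.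
  rewrite /success; apply: eq_bigr => D _; congr (_ * _).
  have := Mred_sumA hS M' D [set y : 'I_S | (minD D <= y <= maxD D)%N].
  rewrite (eq_bigl (fun y : 'I_S => (minD D <= y <= maxD D)%N)); last by move=> y; rewrite inE.
  move=> ->; apply: eq_bigr => z _; congr (_ * _); apply: eq_bigl => w; by rewrite inE.
rewrite eS => hQ.
rewrite /success push.
set F := fun Y : db n.+1 (B ^ S) => \sum_(y : 'I_(B ^ S) | (minD Y <= y <= maxD Y)%N) M' Y y.
suff per : forall D, \sum_(z : 'I_(B ^ S)) Dn D * c * F (Ymap D z) <= Dn D * (G D + K).
  apply: le_trans (ler_sum _ (fun D _ => per D)) _.
  rewrite (eq_bigr (fun D => Dn D * G D + Dn D * K)); last by move=> D _; rewrite mulrDr.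
  by rewrite big_split /= -mulr_suml Dn1 mul1r /K addrA lerD2r lerD2r.
move=> D.
under eq_bigr do rewrite -mulrA.
rewrite -mulr_sumr; apply: ler_wpM2l; first exact: Dn0.
have M0 : forall Y w, 0 <= M' Y w by move=> Y w; case: (hM Y) => h _; exact: h.
set mx := maxD D.
pose E (z : 'I_(B ^ S)) := \sum_(w : 'I_(B ^ S) | agree B S mx.+1 w z) M' (Ymap D z) w.
have sa : forall z : 'I_(B ^ S), c * F (Ymap D z) <=
    c * \sum_(w : 'I_(B ^ S) | (minD D <= decn B S w z <= maxD D)%N) M' (Ymap D z) w + c * E z.
  move=> z; rewrite -mulrDr; apply: ler_wpM2l => //.
  apply: sum_split_le => // w; exact: key_interval.
apply: le_trans (ler_sum _ (fun z _ => sa z)) _.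
rewrite big_split /= lerD2l.
pose Y2 (z : 'I_(B ^ S)) := Yg D (trunc mx z) z.
pose E2 (z : 'I_(B ^ S)) := \sum_(w in [set w : 'I_(B ^ S) | agree B S mx.+1 w z]) M' (Y2 z) w.
have sb : forall z : 'I_(B ^ S), c * E z <= c * (expR eps * E2 z + d').
  move=> z; apply: ler_wpM2l => //.
  have -> : E z = \sum_(w in [set w : 'I_(B ^ S) | agree B S mx.+1 w z]) M' (Ymap D z) w.
    by apply: eq_bigl => w; rewrite inE.
  apply: dp_le1 => //; exact: Ylast_nb.
apply: le_trans (ler_sum _ (fun z _ => sb z)) _.
rewrite (eq_bigr (fun z => expR eps * (c * E2 z) + c * d')); last first.
  by move=> z _; rewrite mulrDr mulrCA.
rewrite big_split /= -mulr_sumr -mulr_suml sum_unif ?expn_gt0 ?B0 // mul1r /K lerD2r.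
rewrite ler_wpM2l ?expR_ge0 //.
rewrite -mulr_sumr.
have mS : (mx < S)%N by apply: maxD_lt.
have cnt := @count_sum R B S mx (fun z w => M' (Y2 z) w) B0 mS
  (fun z w => M0 _ w) (fun z => let: conj _ h := hM (Y2 z) in h)
  (fun z z' a => f_equal (fun Y => M' Y) (Yg_eq n0 a)).
rewrite /c -(unifB R B0 hS) ler_wpM2l // ?invr_ge0 ?ler0n //.
apply: le_trans cnt; rewrite le_eqVlt; apply/orP; left; apply/eqP.
by apply: eq_bigr => z _; apply: eq_bigl => w; rewrite inE.
Qed.

Definition oth (x : 'I_2) : 'I_2 := if x == ord0 then ord_max else ord0.

Lemma othK x : oth (oth x) = x.
Proof. by case: x => [[|[|//]] h]; apply: val_inj. Qed.

Lemma oth_neq x : x != oth x.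
Proof. by case: x => [[|[|//]] h]. Qed.

Definition flipD (D : db 1 2) : db 1 2 := [ffun i => oth (D i)].

Lemma flipDK D : flipD (flipD D) = D.
Proof. by apply/ffunP => i; rewrite !ffunE othK. Qed.

Lemma sum2 (R : realType) (f : 'I_2 -> R) x : \sum_y f y = f x + f (oth x).
Proof.
rewrite big_ord_recl big_ord1.
by case: x => [[|[|//]] h]; rewrite /oth /=; [congr (f _ + f _); apply: val_inj | rewrite addrC; congr (f _ + f _); apply: val_inj].
Qed.

Lemma minD1 S (D : db 1 S) : minD D = D ord0.
Proof. by rewrite /minD big_ord_recl big_ord0; apply/minn_idPl; exact: ltnW. Qed.

Lemma maxD1 S (D : db 1 S) : maxD D = D ord0.
Proof. by rewrite /maxD big_ord_recl big_ord0 maxn0. Qed.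

Lemma base (R : realType) (eps d : R) : 0 <= eps -> 0 <= d ->
  exists D1 : db 1 2 -> R, is_distr D1 /\
   forall M, is_mech M -> is_dp eps d M ->
     success D1 M <= (expR eps + d) / (expR eps + 1).
Proof.
move=> e0 d0; exists (fun _ => 2^-1); split.
  split => [D|]; first by rewrite invr_ge0 ler0n.
  by rewrite sumr_const /db card_ffun !card_ord expn1 -[LHS]mulr_natl mulfV.
move=> M hM hdp.
pose a D := M D (D ord0).
have sa : success (fun _ => 2^-1) M = 2^-1 * \sum_D a D.
  rewrite /success mulr_sumr; apply: eq_bigr => D _; congr (_ * _).
  rewrite minD1 maxD1 (eq_bigl (fun y => y == D ord0)); last first.
    by move=> y; rewrite -eqn_leq eq_sym.
  by rewrite big_pred1_eq.
have ha : forall D, a D <= expR eps * (1 - a (flipD D)) + d.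
  move=> D.
  have hn : neighbors D (flipD D).
    rewrite /neighbors (_ : [set i | D i != flipD D i] = [set: 'I_1]).
      by rewrite cardsT card_ord.
    by apply/setP => i; rewrite !inE ffunE oth_neq.
  have := hdp D (flipD D) hn [set D ord0].
  rewrite !big_set1.
  have -> : M (flipD D) (D ord0) = 1 - a (flipD D).
    have ef : flipD D ord0 = oth (D ord0) by rewrite ffunE.
    case: (hM (flipD D)) => _; rewrite (sum2 _ (D ord0)) /a ef => <-.
    by rewrite addrK.
  by [].
have e1 : 1 <= expR eps by apply: le_trans (expR_ge1Dx eps); lra.
have sf : \sum_D a (flipD D) = \sum_D a D.
  by rewrite [RHS](reindex_inj (can_inj flipDK)).
have s2 : \sum_(D : db 1 2) (expR eps * (1 - a (flipD D)) + d) =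
   expR eps * (2 - \sum_D a D) + 2 * d.
  rewrite big_split /= -mulr_sumr sumrB sf sumr_const /db card_ffun !card_ord /=.
  by rewrite sumr_const /db card_ffun !card_ord expn1 mulr_natl.
have hs : \sum_D a D <= expR eps * (2 - \sum_D a D) + 2 * d.
  by rewrite -s2; apply: ler_sum => D _; exact: ha.
rewrite sa ler_pdivlMr; last by rewrite ltr_pwDr // expR_gt0.
move: hs; set s := \sum_D a D; set e := expR eps => hs.
have h2 : s * (e + 1) <= 2 * (e + d) by nra.
rewrite -mulrA; lra.
Qed.

Fixpoint Qf (R : realType) (eps : R) (delta : nat -> R) (k : nat) : R :=
  match k with
  | 0 => (expR eps + delta 1%N) / (expR eps + 1)
  | k'.+1 => Qf eps delta k' + expR eps * delta k + delta k.+1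
  end.

Lemma Qf_le (R : realType) (eps : R) (delta : nat -> R) k :
  0 <= eps -> (forall j, (0 < j)%N -> 0 <= delta j) ->
  Qf eps delta k <= expR eps / (expR eps + 1) +
     (expR eps + 1) * \sum_(1 <= j < k.+2) delta j - expR eps * delta k.+1.
Proof.
move=> e0 d0.
have e1 : 1 <= expR eps by apply: le_trans (expR_ge1Dx eps); lra.
elim: k => [|k IH] /=.
  rewrite big_nat1.
  have d1 := d0 1%N isT.
  have hp : 0 < expR eps + 1 by lra.
  rewrite mulrDl lerBrDr -addrA lerD2l.
  have : delta 1%N / (expR eps + 1) <= delta 1%N.
    by rewrite ler_pdivrMr // ler_peMr //; lra.
  nra.
rewrite (big_nat_recr k.+2) //=.
move: IH; set s := \sum_(1 <= j < k.+2) delta j; set e := expR eps.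
have := d0 k.+2 isT; have := d0 k.+1 isT; nra.
Qed.

Lemma Saux_pos (b : nat -> nat) k : (forall j, (0 < j)%N -> (0 < b j)%N) -> (0 < Saux b k)%N.
Proof. by move=> bp; elim: k => //= k IH; rewrite expn_gt0 bp. Qed.

Theorem lemma3p3 (R : realType) (eps beta : R) (delta : nat -> R) (b : nat -> nat) :
  0 < eps < 1 / 4 -> 0 < beta < 1 / 4 ->
  (forall n, (0 < n)%N -> 0 < delta n) ->
  (forall m n, (0 < m)%N -> (m <= n)%N -> delta n <= delta m) ->
  (forall n, (0 < n)%N -> Pbound eps delta n <= 1 - beta) ->
  (forall n, (0 < n)%N -> delta n = ((b n)%:R)^-1) ->
  forall n, (0 < n)%N ->
  exists Dn : db n (Sseq b n) -> R,
    is_distr Dn /\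
    forall M : db n (Sseq b n) -> 'I_(Sseq b n) -> R,
      is_mech M -> is_dp eps (delta n) M -> success Dn M <= Pbound eps delta n.
Proof.
move=> /andP [e0 _] _ dpos dmon _ hb n n0.
have bpos : forall k, (0 < k)%N -> (0 < b k)%N.
  move=> k k0; rewrite lt0n; apply/eqP => bk.
  by have := dpos k k0; rewrite hb // bk invr0 ltxx.
have Spos : forall k, (0 < Saux b k)%N := fun k => @Saux_pos b k bpos.
have claim : forall k, exists Dn : db k.+1 (Sseq b k.+1) -> R, is_distr Dn /\
    forall M : db k.+1 (Sseq b k.+1) -> 'I_(Sseq b k.+1) -> R,
      is_mech M -> is_dp eps (delta k.+1) M -> success Dn M <= Qf eps delta k.
  elim => [|k [Dn [hD hB]]].
    exact: (base (ltW e0) (ltW (dpos 1%N isT))).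
  exists (Dnext (b k.+1) Dn); split; first by apply: Dnext_distr => //; exact: bpos.
  move=> M hM hdp.
  have := @step R k.+1 (b k.+1) (Sseq b k.+1) eps (delta k.+1) (delta k.+2)
    (Qf eps delta k) Dn (Spos k) isT (bpos k.+1 isT) (ltW e0) (ltW (dpos k.+2 isT))
    (dmon k.+1 k.+2 isT (leqnSn _)) hD hB M hM hdp.
  by rewrite /= -hb.
case: n n0 => // k _.
have [Dn [hD hB]] := claim k.
exists Dn; split => // M hM hdp.
apply: le_trans (hB M hM hdp) _.
apply: le_trans (Qf_le k (ltW e0) (fun j j0 => ltW (dpos j j0))) _.
rewrite /Pbound lerBlDr lerDl mulr_ge0 ?expR_ge0 //; exact: ltW (dpos k.+1 isT).
Qed.
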